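(* Let $(x_t)_{t=1}^T$ and $(a_t)_{t=1}^T$ be sequences with $x_t,a_t>0$ for all $t$. Then for any $\alpha\in[0,1]$, $$\sum_{t=1}^T\frac{x_t^{1-\alpha}a_t}{\sqrt{1+\sum_{s=1}^tx_s^{1-2\alpha}}}\le2\sqrt{\Big(\sum_{t=1}^Tx_ta_t^2\Big)\log\Big(1+\sum_{t=1}^Tx_t^{1-2\alpha}\Big)}.$$ *)

(* Defs.v *)
From mathcomp Require Import all_boot all_order all_algebra.
From mathcomp Require Import all_classical all_reals all_analysis.

(* Main.v *)
Require Import Defs.
From mathcomp Require Import all_boot all_order all_algebra.
From mathcomp Require Import all_classical all_reals all_analysis.
From mathcomp Require Import ring lra.
Import Order.TTheory GRing.Theory Num.Theory.
Local Open Scope ring_scope.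

Lemma amgm_aux (R : realType) (p s m : R) :
  0 <= p -> 0 <= s -> 0 <= m -> p ^+ 2 <= s * m -> 2 * p <= s + m.
Proof.
move=> hp hs hm h.
rewrite -ler_sqr ?nnegrE ?addr_ge0 ?mulr_ge0 //.
have := sqr_ge0 (s - m).
rewrite !expr2 in h *; nra.
Qed.

Lemma tele_aux (R : realType) (T : nat) (y : nat -> R) :
  (forall t, 0 <= y t) ->
  \sum_(1 <= t < T.+1) (y t / (1 + \sum_(1 <= s < t.+1) y s))
  <= ln (1 + \sum_(1 <= t < T.+1) y t).
Proof.
move=> hy; elim: T => [|T IH].
  by rewrite !big_geq // addr0 ln1.
set S := 1 + \sum_(1 <= t < T.+1) y t.
have S1 : 1 <= S by rewrite lerDl sumr_ge0.
have SS : 1 + \sum_(1 <= t < T.+2) y t = S + y T.+1 by rewrite big_nat_recr //= /S addrA.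
rewrite big_nat_recr //= SS.
have hyT := hy T.+1.
have Sp : 0 < S by lra.
have S'p : 0 < S + y T.+1 by lra.
have E := expR_ge1Dx (ln S - ln (S + y T.+1)).
rewrite expRD expRN !lnK ?posrE // in E.
suff : y T.+1 / (S + y T.+1) <= ln (S + y T.+1) - ln S by lra.
have -> : y T.+1 / (S + y T.+1) = 1 - S / (S + y T.+1).
  by field; rewrite gt_eqF.
lra.
Qed.

Theorem lemma28 (R : realType) (T : nat) (x a : nat -> R)
  (hx : forall t, (1 <= t <= T)%N -> 0 < x t)
  (ha : forall t, (1 <= t <= T)%N -> 0 < a t)
  (alpha : R) (halpha : 0 <= alpha <= 1) :
  \sum_(1 <= t < T.+1)
     (x t `^ (1 - alpha) * a t /
        Num.sqrt (1 + \sum_(1 <= s < t.+1) x s `^ (1 - 2 * alpha)))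
  <= 2 * Num.sqrt ((\sum_(1 <= t < T.+1) x t * a t ^+ 2) *
                   ln (1 + \sum_(1 <= t < T.+1) x t `^ (1 - 2 * alpha))).
Proof.
case: T hx ha => [|T] hx ha.
  by rewrite big_geq // mulr_ge0 // sqrtr_ge0.
set y := fun t => x t `^ (1 - 2 * alpha).
set A := \sum_(1 <= t < T.+2) x t * a t ^+ 2.
set L := ln (1 + \sum_(1 <= t < T.+2) x t `^ (1 - 2 * alpha)).
have hx1 : 0 < x 1%N by apply: hx.
have ha1 : 0 < a 1%N by apply: ha.
have Apos : 0 < A.
  rewrite /A big_ltn // ltr_pwDl ?mulr_gt0 ?exprn_gt0 //.
  rewrite big_nat_cond; apply: sumr_ge0 => i /andP [/andP [i1 i2] _]; rewrite mulr_ge0 ?sqr_ge0 // ltW // hx //.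
  by rewrite ltnS in i2; rewrite i2 andbT ltnW.
have Lpos : 0 < L.
  rewrite /L ln_gt0 // ltrDl big_ltn // ltr_pwDl ?powR_gt0 //.
  by apply: sumr_ge0 => i _; exact: powR_ge0.
have hB := @tele_aux R T.+1 _ (fun t => powR_ge0 (x t) (1 - 2 * alpha)).
rewrite -/L in hB.
set a' : R := Num.sqrt A. set l' : R := Num.sqrt L.
have a'p : 0 < a' by rewrite sqrtr_gt0.
have l'p : 0 < l' by rewrite sqrtr_gt0.
have eA : A = a' ^+ 2 by rewrite sqr_sqrtr // ltW.
have eL : L = l' ^+ 2 by rewrite sqr_sqrtr // ltW.
set lam : R := l' / a'.
have lamp : 0 < lam by rewrite divr_gt0.
set S := fun t => 1 + \sum_(1 <= s < t.+1) x s `^ (1 - 2 * alpha).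
have Spos : forall t, 0 < S t.
  move=> t; rewrite /S ltr_pwDl // sumr_ge0 // => i _; exact: powR_ge0.
have key : forall t, (1 <= t < T.+2)%N ->
   2 * (x t `^ (1 - alpha) * a t / Num.sqrt (S t))
   <= lam * (x t * a t ^+ 2) + (x t `^ (1 - 2 * alpha) / S t) / lam.
  move=> t /andP [t1 t2].
  have xt : 0 < x t by apply: hx; rewrite t1.
  have St := Spos t.
  have sS : 0 < Num.sqrt (S t) by rewrite sqrtr_gt0.
  apply: amgm_aux.
  - by rewrite divr_ge0 ?mulr_ge0 ?powR_ge0 ?sqrtr_ge0 // ltW // ha // t1.
  - by apply: mulr_ge0; [exact: ltW | apply: mulr_ge0; [exact: ltW | exact: sqr_ge0]].
  - by apply: divr_ge0; [apply: divr_ge0; [exact: powR_ge0 | exact: ltW] | exact: ltW].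
  have -> : (x t `^ (1 - alpha) * a t / Num.sqrt (S t)) ^+ 2
      = x t `^ (1 - alpha) ^+ 2 * a t ^+ 2 / S t.
    by rewrite !expr_div_n exprMn sqr_sqrtr // ltW.
  have -> : x t `^ (1 - alpha) ^+ 2 = x t * x t `^ (1 - 2 * alpha).
    rewrite -powR_mulrn ?powR_ge0 // -powRrM.
    rewrite -{2}(powRr1 (ltW xt)) -powRD; last by apply/implyP => _; rewrite gt_eqF.
    by congr (_ `^ _); rewrite /=; ring.
  rewrite le_eqVlt; apply/orP; left; apply/eqP.
  by field; rewrite !gt_eqF.
have hsum := ler_sum_nat key.
rewrite -mulr_sumr big_split /= -mulr_sumr -mulr_suml -/A in hsum.
have hB' : (\sum_(1 <= i < T.+2) x i `^ (1 - 2 * alpha) / S i) / lam <= L / lam.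
  by rewrite ler_pM2r ?invr_gt0.
have hfin : 2 * \sum_(1 <= t < T.+2) (x t `^ (1 - alpha) * a t / Num.sqrt (S t))
   <= 2 * (a' * l').
  apply: (le_trans hsum).
  have -> : 2 * (a' * l') = lam * A + L / lam.
    rewrite eA eL /lam; field; rewrite !gt_eqF //.
  rewrite lerD2l; exact: hB'.
have hsq : Num.sqrt (A * L) = a' * l' by rewrite sqrtrM // ltW.
rewrite hsq.
have h0 : 0 <= a' * l' by rewrite mulr_ge0 // ltW.
rewrite ler_pM2l // in hfin.
apply: (le_trans hfin).
by rewrite ler_peMl // ler1n.
Qed.
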